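(* Let $k$ be a field of prime characteristic $p$. Define $T$-spaces of $k_0\langle X\rangle$ by $H_1=\{x_1^p\}^S$, $H_{n+1}=(H_nH_1)^S$, and $S^{(p)}_1=\{S^{(p)}\}^S$, $S^{(p)}_{n+1}=(S^{(p)}_nS^{(p)}_1)^S$ for $n\ge1$, where $S^{(p)}=\sum_{\sigma\in\Sigma_p}\prod_{i=1}^p x_{\sigma(i)}$. Then $S^{(p)}_m\subseteq H_m$ for every $m\ge1$.
   Context: $X=\{x_1,x_2,\ldots\}$ is countably infinite; $k_0\langle X\rangle$ is the free associative (non-unital) $k$-algebra on $X$. A $T$-space is a $k$-subspace of $k_0\langle X\rangle$ invariant under every algebra endomorphism of $k_0\langle X\rangle$; $(A)^S$ is the $T$-space generated by a subset $A$. For subsets $A,B$, $AB=\{ab:a\in A,b\in B\}$. $\Sigma_p$ is the symmetric group on $p$ letters. *)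

(* Defs.v *)
From HB Require Import structures.
From mathcomp Require Import all_boot all_order all_fingroup all_algebra.
Set Implicit Arguments. Unset Strict Implicit. Unset Printing Implicit Defensive.
Import GRing.Theory.
Local Open Scope ring_scope.

(* The free non-unital associative algebra k_0<X> on X = {x_0, x_1, ...}
   (x_i indexed by nat; the paper's x_{i+1} is our index i).
   An element is represented by its coefficient function on words
   (seq nat); it is a polynomial when it is finitely supported and has
   zero coefficient on the empty word (non-unital). *)
Definition fa (k : fieldType) := seq nat -> k.

Section FreeAlg.
Variable k : fieldType.

Definition fzero : fa k := fun _ => 0.
Definition fadd (f g : fa k) : fa k := fun w => f w + g w.
Definition fscale (c : k) (f : fa k) : fa k := fun w => c * f w.
Definition fmul (f g : fa k) : fa k :=
  fun w => \sum_(1 <= i < size w) f (take i w) * g (drop i w).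

Definition is_poly (f : fa k) : Prop :=
  f [::] = 0 /\ exists s : seq (seq nat), forall w, f w != 0 -> w \in s.

Definition mono (w : seq nat) : fa k := fun u => if u == w then 1 else 0.

(* algebra endomorphisms of k_0<X> (a map on coefficient functions whose
   behaviour on polynomials is that of a k-algebra endomorphism) *)
Definition is_endo (phi : fa k -> fa k) : Prop :=
  [/\ forall f, is_poly f -> is_poly (phi f),
      forall f g, is_poly f -> is_poly g -> phi (fadd f g) = fadd (phi f) (phi g),
      forall c f, is_poly f -> phi (fscale c f) = fscale c (phi f)
    & forall f g, is_poly f -> is_poly g -> phi (fmul f g) = fmul (phi f) (phi g)].

Definition is_Tspace (V : fa k -> Prop) : Prop :=
  [/\ forall f, V f -> is_poly f,
      V fzero,
      forall f g, V f -> V g -> V (fadd f g),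
      forall c f, V f -> V (fscale c f)
    & forall phi f, is_endo phi -> V f -> V (phi f)].

Definition Tgen (A : fa k -> Prop) : fa k -> Prop :=
  fun f => forall V, is_Tspace V -> (forall a, A a -> V a) -> V f.

Definition setmul (A B : fa k -> Prop) : fa k -> Prop :=
  fun h => exists a b, [/\ A a, B b & h = fmul a b].

(* given A_1, the sequence A_1, A_{n+1} = (A_n A_1)^S; Tseq A1 m = A_m (m >= 1) *)
Fixpoint Titer (A1 : fa k -> Prop) (n : nat) : fa k -> Prop :=
  match n with
  | 0 => A1
  | n'.+1 => Tgen (setmul (Titer A1 n') A1)
  end.
Definition Tseq (A1 : fa k -> Prop) (m : nat) := Titer A1 m.-1.

Definition xpow (p : nat) : fa k := mono (nseq p 0%N).

Definition Sp (p : nat) : fa k :=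
  fun u => \sum_(s : 'S_p) mono [seq nat_of_ord (s i) | i <- enum 'I_p] u.

Definition H1 (p : nat) : fa k -> Prop := Tgen (fun f => f = xpow p).
Definition S1 (p : nat) : fa k -> Prop := Tgen (fun f => f = Sp p).

End FreeAlg.

(* Main.v *)
Require Import Defs.
From mathcomp Require Import all_boot all_order all_fingroup all_algebra.
From Stdlib Require Import FunctionalExtensionality.
Set Implicit Arguments. Unset Strict Implicit. Unset Printing Implicit Defensive.
Import GRing.Theory.
Local Open Scope ring_scope.

Section Proof.
Variable k : fieldType.

Definition csub (c : nat -> k) (f : fa k) : fa k :=
  fun w => f (nseq (size w) 0%N) * \prod_(x <- w) c x.

Fixpoint words (L : seq nat) (n : nat) : seq (seq nat) :=
  if n is n'.+1 then [seq x :: v | x <- L, v <- words L n'] else [:: [::]].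

Lemma mem_words L v : all (mem L) v -> v \in words L (size v).
Proof.
elim: v => [|x v IH] //= /andP [hx hv].
exact: (allpairs_f (fun a b => a :: b) hx (IH hv)).
Qed.

Lemma csub_endo (c : nat -> k) (N : nat) :
  (forall x, c x != 0 -> (x < N)%N) -> is_endo (csub c).
Proof.
move=> hc; split.
- move=> f [f0 [s hs]]; split; first by rewrite /csub /= f0 mul0r.
  exists (flatten [seq words (iota 0 N) (size u) | u <- s]) => w.
  rewrite /csub mulf_eq0 negb_or => /andP [hf hp].
  apply/flatten_mapP; exists (nseq (size w) 0%N); first exact: hs.
  rewrite size_nseq; apply: mem_words; apply/allP => x xw.
  rewrite inE mem_iota /= add0n; apply: hc.
  move: hp; rewrite prodf_seq_neq0 => /allP; exact.
- move=> f g _ _; apply: functional_extensionality => w.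
  by rewrite /csub /fadd mulrDl.
- move=> a f _; apply: functional_extensionality => w.
  by rewrite /csub /fscale mulrA.
- move=> f g _ _; apply: functional_extensionality => w.
  rewrite /csub /fmul size_nseq big_distrl /=.
  apply: eq_big_nat => i /andP [i1 iw].
  rewrite take_nseq ?(ltnW iw) // drop_nseq size_take iw size_drop.
  idtac.
  have E : \prod_(x <- w) c x = \prod_(x <- take i w) c x * \prod_(x <- drop i w) c x by rewrite -big_cat cat_take_drop.
  by rewrite E mulrACA.
Qed.


Lemma csub_xpow c p w :
  csub c (xpow k p) w = (size w == p)%:R * \prod_(x <- w) c x.
Proof.
rewrite /csub /xpow /mono; congr (_ * _).
case: eqP => [E|H].
  by rewrite -(size_nseq (size w) 0%N) E size_nseq eqxx.
by case: eqP => // E; case: H; rewrite E.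
Qed.

Variable p : nat.

Definition cI (J : {set 'I_p}) (x : nat) : k :=
  match (insub x : option 'I_p) with Some i => (i \in J)%:R | None => 0 end.

Lemma cI_bound J x : cI J x != 0 -> (x < p)%N.
Proof. by rewrite /cI; case: insubP => //=; rewrite eqxx. Qed.

Lemma cI_val J (i : 'I_p) : cI J (val i) = (i \in J)%:R.
Proof. by rewrite /cI valK. Qed.

Definition sgn (J : {set 'I_p}) : k := \prod_(i : 'I_p) (if i \in J then 1 else -1).

Lemma prod_bool (T : finType) (P : pred T) :
  \prod_(i : T) ((P i)%:R : k) = ([forall i, P i])%:R.
Proof.
case: forallP => [H|H].
  by rewrite big1 // => i _; rewrite H.
have [i Hi] : exists i, ~~ P i.
  by apply/existsP; rewrite -negb_forall; apply/forallP.
by rewrite (bigD1 i) //= (negbTE Hi) mul0r.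
Qed.

Definition word (g : 'I_p -> 'I_p) : seq nat := [seq val (g i) | i <- enum 'I_p].

Lemma key_rhs (g : 'I_p -> 'I_p) :
  \sum_(J : {set 'I_p}) sgn J * \prod_(x <- word g) cI J x =
  ([forall i, i \in codom g])%:R.
Proof.
have E1 : forall J, sgn J * \prod_(x <- word g) cI J x =
   \prod_(i : 'I_p) (if i \in J then 1 else - (i \notin codom g)%:R : k).
  move=> J; rewrite /word big_map enumT.
  under eq_bigr do rewrite cI_val.
  rewrite prod_bool.
  have -> : \prod_(i : 'I_p) (if i \in J then 1 else - (i \notin codom g)%:R : k) =
     \prod_(i : 'I_p) ((if i \in J then 1 else -1 : k) * ((i \in J) || (i \notin codom g))%:R).
    by apply: eq_bigr => i _; case: (i \in J) => /=; rewrite ?mul1r ?mulN1r.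
  rewrite big_split /= prod_bool /sgn; congr (_ * (nat_of_bool _)%:R).
  apply/forallP/forallP => H i.
    case: (boolP (i \in codom g)) => [/codomP [j ->]|]; last by rewrite orbT.
    by rewrite H.
  by move: (H (g i)); rewrite codom_f orbF.
under eq_bigr do rewrite E1.
rewrite -(bigA_distr 1 _ (fun i => 1 : k) (fun i => - (i \notin codom g)%:R)).
rewrite -prod_bool; apply: eq_bigr => i _.
by case: (i \in codom g) => /=; rewrite ?subr0 ?subrr.
Qed.


Lemma word_eq (g h : 'I_p -> 'I_p) : (word g == word h) = [forall i, g i == h i].
Proof.
apply/eqP/forallP => [E i|E].
  have E' : map g (enum 'I_p) = map h (enum 'I_p).
    apply: (inj_map val_inj); move: E; rewrite /word -!map_comp; apply.
  by apply/eqP; apply: (proj2 (eq_in_map _ _ _) E'); rewrite mem_enum.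
by rewrite /word; apply: eq_map => i; rewrite (eqP (E i)).
Qed.

Lemma surj_inj (g : 'I_p -> 'I_p) : [forall i, i \in codom g] -> injective g.
Proof.
move/forallP=> H; apply/injectiveP.
rewrite /injectiveb /dinjectiveb.
apply: (leq_size_uniq (enum_uniq (mem 'I_p))).
  move=> x _; move: (H x); by rewrite /codom /image_mem.
by rewrite size_map.
Qed.

Lemma Sp_word (g : 'I_p -> 'I_p) : Sp k p (word g) = ([forall i, i \in codom g])%:R :> k.
Proof.
rewrite /Sp /mono.
rewrite (eq_bigr (fun s : 'S_p => ([forall i, g i == s i])%:R)); last first.
  by move=> s _; rewrite -word_eq; case: eqP.
case: (boolP [forall i, i \in codom g]) => H.
  have ginj := surj_inj H.
  rewrite (bigD1 (perm ginj)) //= big1.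
    have -> : [forall i, g i == perm ginj i] by apply/forallP => i; rewrite permE.
    by rewrite addr0.
  move=> s hs; case: forallP => // E; case/eqP: hs; apply/permP => i.
  by rewrite permE; apply/eqP; rewrite eq_sym.
rewrite big1 // => s _; case: forallP => // E; case/negP: H; apply/forallP => i.
have -> : i = g ((s^-1)%g i) by rewrite (eqP (E _)) permKV.
exact: codom_f.
Qed.


Lemma Sp_decomp w :
  Sp k p w = \sum_(J : {set 'I_p}) sgn J * csub (cI J) (xpow k p) w.
Proof.
under eq_bigr do rewrite csub_xpow.
case: (eqVneq (size w) p) => hw; last first.
  rewrite big1; last by move=> J _; rewrite mul0r mulr0.
  rewrite /Sp big1 // => s _; rewrite /mono; case: eqP => // E.
  by case/negP: hw; rewrite E size_map size_enum_ord.
under eq_bigr do rewrite mul1r.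
case: (boolP (all (fun x => x < p)%N w)) => ha; last first.
  rewrite big1; last first.
    move=> J _; apply/eqP; rewrite mulf_eq0 prodf_seq_eq0; apply/orP; right.
    move: ha; rewrite -has_predC prodf_seq_eq0; apply: sub_has => x /= hx.
    by apply: contraR hx => /cI_bound ->.
  rewrite /Sp big1 // => s _; rewrite /mono; case: eqP => // E.
  case/negP: ha; rewrite E all_map; apply/allP => i _ /=; exact: ltn_ord.
pose g := fun j : 'I_p => insubd j (nth 0%N w j).
have Ew : w = word g.
  rewrite /word.
  have -> : [seq val (g i) | i <- enum 'I_p] = [seq nth 0%N w n | n <- map val (enum 'I_p)].
    rewrite -map_comp; apply: eq_map => j /=; rewrite /g insubdK //.
    by apply: (allP ha); rewrite mem_nth // hw.
  by apply/esym; rewrite val_enum_ord -hw; exact: mkseq_nth.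
by rewrite Ew Sp_word key_rhs.
Qed.


Definition fsum (T : Type) (s : seq T) (F : T -> fa k) : fa k :=
  foldr (fun x acc => fadd (F x) acc) (fzero k) s.

Lemma fsumE (T : Type) (s : seq T) F w : fsum s F w = \sum_(x <- s) F x w.
Proof.
elim: s => [|x s IH]; first by rewrite big_nil.
by rewrite big_cons /= /fadd IH.
Qed.

Lemma V_Sp (V : fa k -> Prop) : is_Tspace V -> V (xpow k p) -> V (Sp k p).
Proof.
move=> [hpoly h0 hadd hsc hend] hx.
have -> : Sp k p = fsum (index_enum {set 'I_p})
                     (fun J => fscale (sgn J) (csub (cI J) (xpow k p))).
  by apply: functional_extensionality => w; rewrite fsumE Sp_decomp.
elim: (index_enum _) => [|J s IH] //=.
apply: hadd => //; apply: hsc; apply: hend => //.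
exact: (csub_endo (@cI_bound J)).
Qed.

End Proof.

Lemma Titer_mono (k : fieldType) (A B : fa k -> Prop) :
  (forall f, A f -> B f) -> forall n f, Titer A n f -> Titer B n f.
Proof.
move=> hAB; elim=> [|n IH] f //=; first exact: hAB.
move=> hf V hV hsub; apply: hf => // g [a [b [ha hb ->]]].
by apply: hsub; exists a, b; split; [exact: IH | exact: hAB |].
Qed.

Theorem corollary4p2 (k : fieldType) (p : nat) (hp : prime p)
  (hchar : p \in [pchar k]%R) (m : nat) (hm : (1 <= m)%N) :
  forall f : fa k, Tseq (S1 p) m f -> Tseq (H1 p) m f.
Proof.
move=> f; rewrite /Tseq; apply: Titer_mono => g hg V hV hx.
apply: hg => // a ->; apply: V_Sp => //; exact: hx.
Qed.
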